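(* Let $T$ be a finite rooted tree in which every inner node has at least two children, with node set $V$ and leaf set $L$. Let $A,B$ be two disjoint subsets of $L$ and let $S,S'\subseteq V\setminus L$. If $(A,B)$ identifies both $S$ and $S'$, then $S=S'$.
   Context: A pair $(\pi,\sigma)$ of injective maps from $S\subseteq V\setminus L$ to $L$ identifies $S$ if for each $s\in S$, $s$ is the least common ancestor of $\pi(s)$ and $\sigma(s)$ (every node is its own ancestor). For $s\in S$, a node $x$ is $s$-requested in $(\pi,\sigma)$ if $x$ lies on the path of $T$ from $\pi(s)$ to $\sigma(s)$; the pair has unique request if every node is $s$-requested for at most one $s\in S$. A pair $(A,B)$ of disjoint subsets of $L$ identifies $S$ if there is a pair $(\pi,\sigma)$ of injective maps $S\to L$ identifying $S$ with unique request such that $\pi(S)=A$ and $\sigma(S)=B$. *)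

(* Defs.v *)
From mathcomp Require Import all_boot.
Set Implicit Arguments. Unset Strict Implicit. Unset Printing Implicit Defensive.

Definition rooted_tree (T : finType) (r : T) (par : T -> T) : Prop :=
  par r = r /\ forall x : T, exists k, iter k par x = r.

(* x is an ancestor of y (every node is its own ancestor). *)
Definition ancestor (T : finType) (par : T -> T) (x y : T) : Prop :=
  exists k, iter k par y = x.

Definition children (T : finType) (r : T) (par : T -> T) (x : T) : {set T} :=
  [set y | (par y == x) && (y != x)].

Definition leaves (T : finType) (r : T) (par : T -> T) : {set T} :=
  [set x | children r par x == set0].

Definition inner_branching (T : finType) (r : T) (par : T -> T) : Prop :=
  forall x : T, x \notin leaves r par -> 2 <= #|children r par x|.

Definition is_lca (T : finType) (par : T -> T) (s a b : T) : Prop :=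
  ancestor par s a /\ ancestor par s b /\
  forall z, ancestor par z a -> ancestor par z b -> ancestor par z s.

(* x lies on the tree path between a and b *)
Definition on_path (T : finType) (par : T -> T) (a b x : T) : Prop :=
  (ancestor par x a \/ ancestor par x b) /\
  forall z, ancestor par z a -> ancestor par z b -> ancestor par z x.

(* (pi, sigma) : S -> L injective, identifying S, with unique request *)
Definition pair_identifies (T : finType) (r : T) (par : T -> T)
    (pi sigma : T -> T) (S : {set T}) : Prop :=
  {in S, forall s, pi s \in leaves r par} /\
  {in S, forall s, sigma s \in leaves r par} /\
  {in S &, injective pi} /\ {in S &, injective sigma} /\
  {in S, forall s, is_lca par s (pi s) (sigma s)} /\
  (forall x s1 s2, s1 \in S -> s2 \in S ->
        on_path par (pi s1) (sigma s1) x -> on_path par (pi s2) (sigma s2) x ->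
        s1 = s2).

Definition sets_identify (T : finType) (r : T) (par : T -> T)
    (A B S : {set T}) : Prop :=
  exists pi sigma : T -> T,
    pair_identifies r par pi sigma S /\ pi @: S = A /\ sigma @: S = B.

(* Main.v *)
Require Import Defs.
From mathcomp Require Import all_boot zify.
From Stdlib Require Import ClassicalEpsilon.
Set Implicit Arguments. Unset Strict Implicit. Unset Printing Implicit Defensive.

Section Tree.
Variables (T : finType) (r : T) (par : T -> T).
Hypothesis Ht : rooted_tree r par.
Local Notation anc := (ancestor par).

Lemma iter_r j : iter j par r = r.
Proof. case: Ht => Hr _; elim: j => //= j ->; exact Hr. Qed.

Lemma anc_refl x : anc x x. Proof. by exists 0. Qed.
Lemma anc_trans x y z : anc x y -> anc y z -> anc x z.
Proof. move=> [m Hm] [k Hk]; exists (m + k); by rewrite iterD Hk Hm. Qed.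
Lemma anc_par x : anc (par x) x. Proof. by exists 1. Qed.

Lemma anc_cmp x z y : anc x y -> anc z y -> anc x z \/ anc z x.
Proof.
move=> [k Hk] [m Hm]; case: (leqP k m) => h.
- right; exists (m - k); by rewrite -Hk -iterD subnK.
- left; exists (k - m); by rewrite -Hm -iterD subnK // ltnW.
Qed.

Lemma iter_mul n x : iter n par x = x -> forall j, iter (j * n) par x = x.
Proof. move=> H; elim=> // j IH; by rewrite mulSn iterD IH H. Qed.

Lemma cyc n x : 0 < n -> iter n par x = x -> x = r.
Proof.
move=> n0 H; case: Ht => _ /(_ x) [k Hk].
have := iter_mul H k; have hk : k <= k * n by rewrite leq_pmulr.
by rewrite -(subnK hk) iterD Hk iter_r => <-.
Qed.

Lemma noback x : anc x (par x) -> par x = x.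
Proof.
move=> [m Hm]; have : iter m.+1 par x = x by rewrite iterSr.
move/cyc => /(_ isT) ->; by case: Ht.
Qed.

Lemma anc_antisym x y : anc x y -> anc y x -> x = y.
Proof.
move=> [a Ha] [b Hb]; case: a Ha => [|a] Ha; first by rewrite -Ha.
have : iter (a.+1 + b) par x = x by rewrite iterD Hb.
move/cyc => /(_ isT) ex; rewrite ex iter_r in Hb; by rewrite ex.
Qed.

Lemma anc_step z c : anc z c -> z <> c -> anc z (par c).
Proof.
move=> [[|k] Hk] hne; first by case: hne.
by exists k; rewrite -iterSr.
Qed.

Definition ancb x y : bool :=
  if excluded_middle_informative (anc x y) then true else false.
Lemma ancbP x y : reflect (anc x y) (ancb x y).
Proof. rewrite /ancb; case: excluded_middle_informative => h; by constructor. Qed.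

End Tree.
Section Main.
Variables (T : finType) (r : T) (par : T -> T).
Hypothesis Ht : rooted_tree r par.
Local Notation anc := (ancestor par).

Lemma path_par a b c : anc c a -> ~ anc c b -> on_path par a b (par c).
Proof.
move=> ha hb; split; first by left; apply: anc_trans ha; apply: anc_par.
move=> z za zb; case: (anc_cmp za ha) => h.
- apply: anc_step => // ezc; apply: hb; by rewrite -ezc.
- case: hb; exact: anc_trans h zb.
Qed.

Lemma on_path_sym a b x : on_path par a b x -> on_path par b a x.
Proof. move=> [[h|h] H]; split; [right|by move=> z ? ?; apply: H|left|by move=> z ? ?; apply: H] => //. Qed.

Lemma child_toward x k : forall y, iter k par y = x -> x <> y ->
  exists c, [/\ par c = x, c <> x & anc c y].
Proof.
elim: k => [|k IH] y /= hk hne; first by case: hne.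
case: (eqVneq (iter k par y) x) => h; first exact: IH.
exists (iter k par y); split => //; [exact/eqP | by exists k].
Qed.

Lemma top a b s c1 c2 v : is_lca par s a b -> par c1 = v -> c1 <> v ->
  par c2 = v -> c2 <> v -> c1 <> c2 -> anc c1 a -> ~ anc c1 b ->
  (anc c2 a \/ anc c2 b) -> s = v.
Proof.
move=> [sa [sb sl]] p1 n1 p2 n2 n12 c1a c1b c2ab.
have c2b : anc c2 b.
  case: c2ab => // c2a; exfalso.
  case: (anc_cmp c1a c2a) => h.
  - apply: n1; rewrite -p1; apply: esym; apply: (noback Ht); rewrite p1 -p2.
    exact: anc_step.
  - apply: n2; rewrite -p2; apply: esym; apply: (noback Ht); rewrite p2 -p1.
    by apply: anc_step => // e; apply: n12.
have va : anc v a by rewrite -p1; apply: anc_trans c1a; apply: anc_par.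
have vb : anc v b by rewrite -p2; apply: anc_trans c2b; apply: anc_par.
have vs := sl _ va vb.
case: (anc_cmp c1a sa) => h.
- case: c1b; exact: anc_trans h sb.
- apply: (anc_antisym Ht) => //; rewrite -p1; apply: anc_step => // e.
  by apply: c1b; rewrite -e.
Qed.

Variables (pi sigma : T -> T) (S : {set T}).
Hypothesis H : pair_identifies r par pi sigma S.

Definition sub c := [set y | ancb par c y].
Lemma in_sub c y : (y \in sub c) = ancb par c y. Proof. by rewrite inE. Qed.
Definition cr c s := (s \in S) && (ancb par c (pi s) != ancb par c (sigma s)).
Definition PP c := [set s in S | ancb par c (pi s)].
Definition QQ c := [set s in S | ancb par c (sigma s)].

Lemma cr_path c s : cr c s -> on_path par (pi s) (sigma s) (par c).
Proof.
case/andP=> _.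
case: (ancbP par c (pi s)) => ha; case: (ancbP par c (sigma s)) => hb //= _.
- exact: path_par.
- apply: on_path_sym; exact: path_par.
Qed.

Lemma cr_uniq c s1 s2 : cr c s1 -> cr c s2 -> s1 = s2.
Proof.
move=> h1 h2; case: H => _ [_ [_ [_ [_ U]]]].
apply: (U (par c)); [by case/andP: h1|by case/andP: h2|exact: cr_path|exact: cr_path].
Qed.

Lemma cross_iff c : [exists s, cr c s] = (#|PP c| != #|QQ c|).
Proof.
rewrite -(cardsID (QQ c) (PP c)) -(cardsID (PP c) (QQ c)) setIC.
have hPQ s : s \in PP c :\: QQ c -> cr c s.
  rewrite !inE => /andP [/negP hq /andP [sS hp]]; rewrite /cr sS hp /=.
  apply/negP => hs; apply: hq; by rewrite sS.
have hQP s : s \in QQ c :\: PP c -> cr c s.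
  rewrite !inE => /andP [/negP hq /andP [sS hp]]; rewrite /cr sS hp /=.
  apply/negP => hs; apply: hq; by rewrite sS (eqP hs).
apply/idP/idP.
- case/existsP => s hs.
  have [sS hx] := andP hs.
  case hpi : (ancb par c (pi s)) in hx.
  + have sPQ : s \in PP c :\: QQ c.
      by rewrite !inE sS hpi andbT /=; move: hx; case: (ancb par c (sigma s)).
    have -> : QQ c :\: PP c = set0.
      apply/setP => t; rewrite in_set0; apply/negbTE/negP => ht.
      move: (cr_uniq (hQP _ ht) hs) => e; subst t.
      by move: ht; rewrite !inE hpi sS.
    have : #|PP c :\: QQ c| > 0 by apply/card_gt0P; exists s.
    rewrite cards0; lia.
  + have sQP : s \in QQ c :\: PP c.
      by rewrite !inE sS hpi /=; move: hx; case: (ancb par c (sigma s)).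
    have -> : PP c :\: QQ c = set0.
      apply/setP => t; rewrite in_set0; apply/negbTE/negP => ht.
      move: (cr_uniq (hPQ _ ht) hs) => e; subst t.
      by move: ht; rewrite !inE hpi sS ?andbF.
    have : #|QQ c :\: PP c| > 0 by apply/card_gt0P; exists s.
    rewrite cards0; lia.
- apply: contraR => /existsPn hn.
  have -> : PP c :\: QQ c = set0.
    by apply/setP => t; rewrite in_set0; apply/negbTE/negP => /hPQ; rewrite (negbTE (hn t)).
  have -> : QQ c :\: PP c = set0.
    by apply/setP => t; rewrite in_set0; apply/negbTE/negP => /hQP; rewrite (negbTE (hn t)).
  by [].
Qed.

Lemma card_A A c : pi @: S = A -> #|A :&: sub c| = #|PP c|.
Proof.
move=> <-; case: H => _ [_ [ipi _]].
have -> : pi @: S :&: sub c = pi @: PP c.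
  apply/setP => y; rewrite inE; apply/andP/imsetP.
  - by move=> [/imsetP [s sS ->] hs]; exists s => //; rewrite inE sS -in_sub.
  - by move=> [s]; rewrite inE => /andP [sS hs] ->; split; [apply: imset_f | rewrite in_sub].
apply: card_in_imset => x y; rewrite !inE => /andP [xS _] /andP [yS _]; exact: ipi.
Qed.

Lemma card_B B c : sigma @: S = B -> #|B :&: sub c| = #|QQ c|.
Proof.
move=> <-; case: H => _ [_ [_ [isg _]]].
have -> : sigma @: S :&: sub c = sigma @: QQ c.
  apply/setP => y; rewrite inE; apply/andP/imsetP.
  - by move=> [/imsetP [s sS ->] hs]; exists s => //; rewrite inE sS -in_sub.
  - by move=> [s]; rewrite inE => /andP [sS hs] ->; split; [apply: imset_f | rewrite in_sub].
apply: card_in_imset => x y; rewrite !inE => /andP [xS _] /andP [yS _]; exact: isg.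
Qed.

Hypothesis HS : S \subset ~: leaves r par.

Lemma charS v : v \in S <-> exists c1 c2, [/\ par c1 = v, c1 <> v, par c2 = v, c2 <> v &
   [/\ c1 <> c2, #|PP c1| != #|QQ c1| & #|PP c2| != #|QQ c2|]].
Proof.
case: H => lpi [lsg [_ [_ [lca U]]]].
split.
- move=> vS.
  have vnl : v \notin leaves r par by move: (subsetP HS v vS); rewrite inE.
  have [va [vb vl]] := lca v vS.
  have npa : v <> pi v by move=> e; move: vnl; rewrite e lpi.
  have npb : v <> sigma v by move=> e; move: vnl; rewrite e lsg.
  case: va => ka hka; case: vb => kb hkb.
  have [c1 [p1 n1 a1]] := child_toward hka npa.
  have [c2 [p2 n2 b2]] := child_toward hkb npb.
  have nb1 : ~ anc c1 (sigma v).
    move=> h; apply: n1; rewrite -p1; apply: esym; apply: (noback Ht); rewrite p1; exact: vl.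
  have na2 : ~ anc c2 (pi v).
    move=> h; apply: n2; rewrite -p2; apply: esym; apply: (noback Ht); rewrite p2; exact: vl.
  have n12 : c1 <> c2 by move=> e; apply: nb1; rewrite e.
  exists c1, c2; split => //; split => //; rewrite -cross_iff; apply/existsP; exists v;
    rewrite /cr vS /=.
  + by case: (ancbP par c1 (pi v)) => // _; case: (ancbP par c1 (sigma v)).
  + by case: (ancbP par c2 (pi v)) => //= _; case: (ancbP par c2 (sigma v)).
- move=> [c1 [c2 [p1 n1 p2 n2 [n12 h1 h2]]]].
  move: h1 h2; rewrite -!cross_iff => /existsP [s1 hs1] /existsP [s2 hs2].
  have e : s1 = s2.
    apply: (U v); [by case/andP: hs1|by case/andP: hs2|..].
    + by rewrite -p1; apply: cr_path.
    + by rewrite -p2; apply: cr_path.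
  subst s2.
  have s1S : s1 \in S by case/andP: hs1.
  move: hs1 hs2; rewrite /cr s1S /=.
  have L := lca s1 s1S.
  have L' : is_lca par s1 (sigma s1) (pi s1) by case: L => [a [b c]]; split => //; split => // z ? ?; apply: c.
  case: (ancbP par c1 (pi s1)) => h1a; case: (ancbP par c1 (sigma s1)) => h1b //= _;
  case: (ancbP par c2 (pi s1)) => h2a; case: (ancbP par c2 (sigma s1)) => h2b //= _.
  all: first [ by rewrite -(top L p1 n1 p2 n2 n12 h1a h1b (or_introl h2a))
              | by rewrite -(top L p1 n1 p2 n2 n12 h1a h1b (or_intror h2b))
              | by rewrite -(top L' p1 n1 p2 n2 n12 h1b h1a (or_introl h2b))
              | by rewrite -(top L' p1 n1 p2 n2 n12 h1b h1a (or_intror h2a)) ].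
Qed.

End Main.

Lemma charAB (T : finType) (r : T) (par : T -> T) (A B S : {set T}) :
  rooted_tree r par -> S \subset ~: leaves r par -> sets_identify r par A B S ->
  forall v, v \in S <-> exists c1 c2, [/\ par c1 = v, c1 <> v, par c2 = v, c2 <> v &
   [/\ c1 <> c2, #|A :&: sub par c1| != #|B :&: sub par c1|
     & #|A :&: sub par c2| != #|B :&: sub par c2|]].
Proof.
move=> Ht HS [pi [sigma [H [hA hB]]]] v.
rewrite (charS Ht H HS v).
split=> -[c1 [c2 [p1 n1 p2 n2 [n12 h1 h2]]]]; exists c1, c2; split => //; split => //.
all: move: h1 h2.
all: rewrite ?(card_A H c1 hA) ?(card_B H c1 hB) ?(card_A H c2 hA) ?(card_B H c2 hB) //.
Qed.

Theorem lemma3p6 (T : finType) (r : T) (par : T -> T)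
  (A B S S' : {set T}) :
  rooted_tree r par -> inner_branching r par ->
  A \subset leaves r par -> B \subset leaves r par -> [disjoint A & B] ->
  S \subset ~: leaves r par -> S' \subset ~: leaves r par ->
  sets_identify r par A B S -> sets_identify r par A B S' ->
  S = S'.
Proof.
move=> Ht _ _ _ _ HS HS' I I'.
apply/setP => v; apply/idP/idP => hv.
- by apply/(charAB Ht HS' I'); apply/(charAB Ht HS I).
- by apply/(charAB Ht HS I); apply/(charAB Ht HS' I').
Qed.
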